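(* Let $k\ge0$, $m\ge1$ and define $Q(a,x):=\sum_{\varepsilon\in\{0,1\}^k}(-1)^{\#1(\varepsilon)}P(\varepsilon;b)$, where $\#1(\varepsilon)$ is the number of ones in $\varepsilon$. Then $Q(a,x)$ can be written as a quotient $f(a,x)/g(a,x)$ of polynomials such that $g$ has no factor of the form $M(\varepsilon';b;t)$ for any $\varepsilon'\in\{0,1\}^k$ and any $1\le t\le k$.
   Context: Let $a=(a_1,\dots,a_k)$ and $x=(x_1,\dots,x_m)$ be indeterminates and $b=(b_1,\dots,b_{k+m}):=(a_1,\dots,a_k,x_1,\dots,x_m)$. For a binary sequence $\varepsilon=(\varepsilon_1,\dots,\varepsilon_k)$ put $\delta^\varepsilon=(\delta^\varepsilon_1,\dots,\delta^\varepsilon_{k+m}):=(1,\varepsilon_1,\dots,\varepsilon_k,0,\dots,0)$ (length $k+m$: a $1$ prepended and $m-1$ zeros appended). Let $L(\delta^\varepsilon,j):=\max\{i\le j:\delta^\varepsilon_i=1\}$, $M(\varepsilon;b;j):=\sum_{\ell=L(\delta^\varepsilon,j)}^{j}b_\ell$, and $P(\varepsilon;b):=\prod_{j=1}^{k+m}\frac1{M(\varepsilon;b;j)}$. *)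

(* Defs.v *)
From HB Require Import structures.
From mathcomp Require Import all_boot all_order all_algebra.
From mathcomp Require Import fraction.
From mathcomp Require Import mpoly.
Set Implicit Arguments. Unset Strict Implicit. Unset Printing Implicit Defensive.
Import Order.TTheory GRing.Theory Num.Theory.
Local Open Scope ring_scope.

Notation tofracM := (@FracField.tofrac _).
Notation "x %:F" := (@FracField.tofrac _ x) : ring_scope.

(* Polynomial ring Q[b_1,...,b_{k+m}] = Q[a_1..a_k, x_1..x_m];
   b_l (1-based) is the variable 'X_(l-1). *)
Definition PolyR (k m : nat) := {mpoly rat[k + m]}.

Definition bvar (k m : nat) (l : nat) : {mpoly rat[k + m]} :=
  match @insub nat (fun i => i < k + m)%N _ l.-1 with
  | Some i => 'X_(i : 'I_(k + m))
  | None => 0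
  end.

Definition delta (k : nat) (eps : {ffun 'I_k -> bool}) (i : nat) : bool :=
  match i with
  | 0 => false
  | 1 => true
  | i'.+2 => match @insub nat (fun j => j < k)%N _ i' with
             | Some j => eps (j : 'I_k)
             | None => false
             end
  end.

Definition Lidx (d : nat -> bool) (j : nat) : nat :=
  (\max_(i < j.+1 | d i) (i : nat))%N.

Definition Mform (k m : nat) (eps : {ffun 'I_k -> bool}) (j : nat)
  : {mpoly rat[k + m]} :=
  \sum_(Lidx (delta eps) j <= l < j.+1) bvar k m l.

Definition Pfrac (k m : nat) (eps : {ffun 'I_k -> bool})
  : {fraction {mpoly rat[k + m]}} :=
  \prod_(1 <= j < (k + m).+1) ((Mform m eps j)%:F)^-1.

Definition Qfrac (k m : nat) : {fraction {mpoly rat[k + m]}} :=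
  \sum_(eps : {ffun 'I_k -> bool})
     (-1) ^+ #|[set i | eps i]| * Pfrac m eps.

Definition mdvd (n : nat) (p q : {mpoly rat[n]}) : Prop :=
  exists h : {mpoly rat[n]}, q = p * h.

(* Main.v *)
Require Import Defs.
From HB Require Import structures.
From mathcomp Require Import all_boot all_order all_algebra.
From mathcomp Require Import fraction.
From mathcomp Require Import mpoly.
From mathcomp Require Import ring zify.
Set Implicit Arguments. Unset Strict Implicit. Unset Printing Implicit Defensive.
Import GRing.Theory.
Local Open Scope ring_scope.

Section Abs.
Variable K : fieldType.
Variable be : nat -> K.

Definition S p q := \sum_(p <= l < q.+1) be l.
Definition E p q := \prod_(p <= t < q.+1) (S p t)^-1.
Definition Eb p r := \prod_(p <= t < r.+1) (S t r)^-1.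
Fixpoint Tf d c p := match d with
  | 0 => if c == p then (be p)^-1 else 0
  | d'.+1 => (S p (p + d'.+1))^-1 * (Tf d' c p.+1 + Tf d' c p) end.

Lemma Tf0 d c p : ((c < p) || (p + d < c))%N -> Tf d c p = 0.
Proof.
elim: d p => [|d IH] p /= H.
  case: eqP => // E; subst; move: H; rewrite addn0 ltnn; by [].
rewrite (IH p.+1) ?(IH p) ?addr0 ?mulr0 //; lia.
Qed.

Variable N : nat.
Hypothesis hS : forall p q, (1 <= p)%N -> (p <= q)%N -> (q <= N)%N -> S p q != 0.

Lemma Snn p : S p p = be p. Proof. by rewrite /S big_nat1. Qed.

Lemma shuf d : forall p r, (1 <= p)%N -> (p + d <= N)%N -> (p <= r.+1)%N -> (r <= p + d)%N ->
  Eb p r * E r.+1 (p + d) = Tf d r p + Tf d r.+1 p.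
Proof.
elim: d => [|d IH] p r h1 h2 h3 h4.
  case: (eqVneq p r.+1) => [->|ne].
    rewrite /= eqxx (ltn_eqF (ltnSn r)) addn0 /Eb /E big_geq // big_nat1 Snn.
    by rewrite mul1r add0r.
  have -> : r = p by lia.
  rewrite /= eqxx addn0 /Eb /E big_nat1 Snn big_geq //.
  by rewrite mulr1 gtn_eqF // addr0.
case: (eqVneq p r.+1) => [E1|ne].
  subst p.
  rewrite /Eb big_geq // mul1r.
  rewrite (Tf0 (d:=d.+1) (c:=r)) ?ltnSn // add0r /=.
  rewrite (Tf0 (d:=d) (c:=r.+1)) ?ltnSn // add0r.
  have := IH r.+1 r h1 ltac:(lia) ltac:(lia) ltac:(lia).
  rewrite /Eb big_geq // mul1r (Tf0 (d:=d) (c:=r)) ?ltnSn // add0r => <-.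
  rewrite /E (big_nat_recr (r.+1 + d.+1)) /=; last lia.
  by rewrite addnS mulrC.
case: (eqVneq r (p + d.+1)) => [E2|ne2].
  subst r.
  rewrite /E big_geq // mulr1.
  rewrite (Tf0 (d:=d.+1) (c:=(p + d.+1).+1)); last (apply/orP; right; lia).
  rewrite addr0 /= (Tf0 (d:=d) (c:=p + d.+1) (p:=p)); last (apply/orP; right; lia).
  rewrite addr0.
  have := IH p.+1 (p + d.+1) ltac:(lia) ltac:(lia) ltac:(lia) ltac:(lia).
  rewrite /E big_geq; last lia.
  rewrite mulr1 (Tf0 (d:=d) (c:=(p + d.+1).+1)); last (apply/orP; right; lia).
  rewrite addr0 => <-.
  by rewrite /Eb big_ltn //; lia.
have IH1 := IH p.+1 r ltac:(lia) ltac:(lia) ltac:(lia) ltac:(lia).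
have IH2 := IH p r h1 ltac:(lia) ltac:(lia) ltac:(lia).
rewrite /= -mulrDr addrACA -IH2.
rewrite addSn -addnS in IH1; rewrite -IH1.
have -> : Eb p r = (S p r)^-1 * Eb p.+1 r by rewrite /Eb big_ltn //; lia.
rewrite !addnS.
have hA : S p r != 0 by apply: hS; lia.
have hB : S r.+1 (p + d).+1 != 0 by apply: hS; lia.
have hAB : S p (p + d).+1 = S p r + S r.+1 (p + d).+1.
  by rewrite /S (big_cat_nat (n:=r.+1)) //; lia.
have hAB0 : S p r + S r.+1 (p + d).+1 != 0 by rewrite -hAB; apply: hS; lia.
rewrite hAB.
rewrite [E r.+1 (p + d).+1]/E (big_nat_recr (p + d).+1) /=; last lia.
rewrite -/(E r.+1 (p + d)).
field.
by rewrite hA hB hAB0.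
Qed.

Lemma Lidx_eq (d : nat -> bool) j c : (c <= j)%N -> d c ->
  (forall i, (c < i <= j)%N -> ~~ d i) -> Lidx d j = c.
Proof.
move=> hc dc hi; apply/eqP; rewrite eqn_leq; apply/andP; split.
  apply/bigmax_leqP => i di; rewrite leqNgt; apply/negP => ci.
  have := hi i; rewrite ci /= -ltnS ltn_ord => /(_ isT); by rewrite di.
have hc' : (c < j.+1)%N by [].
exact: (leq_bigmax_cond (F := fun i : 'I_j.+1 => nat_of_ord i) (Ordinal hc') dc).
Qed.

Lemma Lidx_ext (d d' : nat -> bool) j : (forall i, (i <= j)%N -> d i = d' i) ->
  Lidx d j = Lidx d' j.
Proof. move=> h; rewrite /Lidx; apply: eq_bigl => i; exact: h (ltn_ord i). Qed.

Definition ext k (e : {ffun 'I_k -> bool}) (b : bool) : {ffun 'I_k.+1 -> bool} :=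
  [ffun i : 'I_k.+1 => match @insub nat (fun x => (x < k)%N) _ (val i) with
                       | Some j => e (j : 'I_k) | None => b end].

Lemma ext_lt k (e : {ffun 'I_k -> bool}) b (i : 'I_k.+1) (j : 'I_k) :
  val i = val j -> ext e b i = e j.
Proof.
move=> v; rewrite ffunE; case: insubP => [j' _ vj|].
  by congr (e _); apply: val_inj; rewrite vj.
by rewrite v ltn_ord.
Qed.

Lemma ext_max k (e : {ffun 'I_k -> bool}) b (i : 'I_k.+1) :
  val i = k -> ext e b i = b.
Proof.
move=> v; rewrite ffunE; case: insubP => [j' _ vj|] //.
by move: (ltn_ord j'); rewrite vj v ltnn.
Qed.

Lemma delta_big k (e : {ffun 'I_k -> bool}) i : (k.+2 <= i)%N -> delta e i = false.
Proof.
case: i => [|[|i]] //= h; case: insubP => [j _ vj|] //.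
by move: (ltn_ord j); rewrite vj; lia.
Qed.

Lemma delta_ext k (e : {ffun 'I_k -> bool}) b i :
  delta (ext e b) i = if i == k.+2 then b else delta e i.
Proof.
case: i => [|[|i]] //=; rewrite !eqSS.
case: insubP => [j1 _ v1|n1]; case: insubP => [j2 _ v2|n2] /=.
- rewrite (@ext_lt _ e b _ j2); last by rewrite v1 v2.
  have : i != k by rewrite -v2 neq_ltn ltn_ord.
  by move/negbTE => ->.
- have hj1 : (i < k.+1)%N by rewrite -v1; exact: ltn_ord.
  rewrite ext_max; last (rewrite v1; lia).
  have -> : i == k by lia.
  by [].
- have hj2 : (i < k)%N by rewrite -v2; exact: ltn_ord.
  lia.
- have -> : (i == k) = false by (move: n1 n2; lia).
  by [].
Qed.

Lemma sgnE k (e : {ffun 'I_k -> bool}) :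
  (-1) ^+ #|[set i | e i]| = \prod_(i < k) (if e i then -1 else 1) :> K.
Proof.
rewrite -big_mkcond /= -prodr_const; apply: eq_bigl => i; by rewrite inE.
Qed.

Lemma sgn_ext k (e : {ffun 'I_k -> bool}) b :
  (-1) ^+ #|[set i | ext e b i]| =
  (-1) ^+ #|[set i | e i]| * (if b then -1 else 1) :> K.
Proof.
rewrite !sgnE big_ord_recr /= (@ext_max _ e b ord_max) //.
congr (_ * _); apply: eq_bigr => i _; by rewrite (@ext_lt _ e b _ i).
Qed.

Definition term k (e : {ffun 'I_k -> bool}) n :=
  \prod_(1 <= j < n.+1) (S (Lidx (delta e) j) j)^-1.
Definition Phi k n :=
  \sum_(e : {ffun 'I_k -> bool}) (-1) ^+ #|[set i | e i]| * term e n.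

Lemma term_ext_false k (e : {ffun 'I_k -> bool}) n : term (ext e false) n = term e n.
Proof.
apply: eq_bigr => j _; congr ((S _ j)^-1); apply: Lidx_ext => i _.
rewrite delta_ext; case: eqP => // ->; by rewrite delta_big.
Qed.

Lemma term_ext_true k (e : {ffun 'I_k -> bool}) n : (k.+1 <= n)%N ->
  term (ext e true) n = term e k.+1 * E k.+2 n.
Proof.
move=> hn; rewrite /term (big_cat_nat (n:=k.+2)) //; congr (_ * _).
  apply: eq_big_nat => j hj; congr ((S _ j)^-1); apply: Lidx_ext => i hi.
  rewrite delta_ext; have -> : (i == k.+2) = false by lia. by [].
apply: eq_big_nat => j hj; congr ((S _ j)^-1); apply: Lidx_eq.
- lia.
- by rewrite delta_ext eqxx.
- move=> i hi; rewrite delta_ext; have -> : (i == k.+2) = false by lia.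
  by rewrite delta_big //; lia.
Qed.

Lemma PhiS k n : (k.+1 <= n)%N -> Phi k.+1 n = Phi k n - Phi k k.+1 * E k.+2 n.
Proof.
move=> hn; rewrite /Phi (reindex (fun p : {ffun 'I_k -> bool} * bool => ext p.1 p.2)) /=.
  rewrite -(pair_big xpredT xpredT (fun e b => (-1) ^+ #|[set i | ext e b i]| * term (ext e b) n)) /=.
  rewrite mulr_suml -sumrB; apply: eq_bigr => e _.
  rewrite big_bool /= !sgn_ext term_ext_false term_ext_true //.
  ring.
exists (fun eps : {ffun 'I_k.+1 -> bool} => ([ffun j => eps (widen_ord (leqnSn k) j)], eps ord_max)).
  move=> [e b] _ /=; congr pair.
    by apply/ffunP => j; rewrite ffunE (@ext_lt _ e b _ j).
  by rewrite ext_max.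
move=> eps _; apply/ffunP => i; rewrite ffunE; case: insubP => [j _ vj|nj].
  by rewrite ffunE; congr (eps _); apply: val_inj.
congr (eps _); apply: val_inj => /=.
apply/eqP; rewrite eqn_leq leqNgt nj /= -ltnS; exact: ltn_ord.
Qed.

Lemma Phi0 n : Phi 0 n = E 1 n.
Proof.
rewrite /Phi (big_pred1 [ffun i : 'I_0 => false]); last first.
  by move=> e /=; symmetry; apply/eqP/ffunP => -[].
rewrite sgnE big_ord0 mul1r; apply: eq_big_nat => j hj; congr ((S _ j)^-1).
apply: Lidx_eq => //; first lia.
move=> [|[|i]] //= _; by case: insubP => // [[]].
Qed.

Lemma Phi_formula k n : (k.+1 <= n)%N -> (n <= N)%N ->
  Phi k n = (-1) ^+ k * Tf n.-1 k.+1 1.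
Proof.
elim: k n => [|k IH] n h1 h2.
  rewrite Phi0 expr0 mul1r.
  have := shuf (d:=n.-1) (p:=1) (r:=0) isT ltac:(lia) isT ltac:(lia).
  by rewrite /Eb big_geq // mul1r add1n prednK // (Tf0 (c:=0)) // add0r.
rewrite PhiS; last lia.
rewrite (IH n) ?(IH k.+1) //=; try lia.
have H1 := shuf (d:=k) (p:=1) (r:=k.+1) isT ltac:(lia) isT ltac:(lia).
rewrite /E big_geq ?mulr1 in H1; last lia.
rewrite (Tf0 (c:=k.+2)) ?addr0 in H1; last lia.
have H2 := shuf (d:=n.-1) (p:=1) (r:=k.+1) isT ltac:(lia) isT ltac:(lia).
rewrite add1n prednK in H2; last lia.
rewrite -H1 -mulrA H2 exprS; ring.
Qed.
End Abs.

Import Order.TTheory Num.Theory.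

Lemma fracid (K : fieldType) (L G1 G2 F1 F2 : K) : L != 0 -> G1 != 0 -> G2 != 0 ->
  L^-1 * (F1 / G1 + F2 / G2) = (F1 * G2 + F2 * G1) / (L * G1 * G2).
Proof. move=> h1 h2 h3; field; by rewrite h1 h2 h3. Qed.

Section Conc.
Variables k m : nat.
Hypothesis hm : (1 <= m)%N.
Definition be (l : nat) : {fraction {mpoly rat[k + m]}} := (bvar k m l)%:F.
Definition v0 (i : 'I_(k + m)) : rat := if (i < k)%N then 0 else 1.
Definition w1 (i : 'I_(k + m)) : rat := 1.

Lemma Sbe p q : S be p q = (\sum_(p <= l < q.+1) bvar k m l)%:F.
Proof. by rewrite rmorph_sum. Qed.

Lemma Q_Phi : Qfrac k m = Phi be k (k + m).
Proof.
apply: eq_bigr => e _; congr (_ * _); apply: eq_bigr => j _.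
by rewrite /Mform Sbe.
Qed.

Lemma bvar_w l : (1 <= l <= k + m)%N -> meval w1 (bvar k m l) = 1.
Proof.
move=> hl; rewrite /bvar; case: insubP => [i _ vi|h]; first by rewrite mevalXU.
exfalso; move: h; lia.
Qed.

Lemma hS p q : (1 <= p)%N -> (p <= q)%N -> (q <= k + m)%N -> S be p q != 0.
Proof.
move=> h1 h2 h3; rewrite Sbe tofrac_eq0; apply/negP => /eqP H.
have := congr1 (meval w1) H; rewrite meval0 raddf_sum.
rewrite (eq_big_nat _ _ (F2 := fun _ => 1)); last by move=> l hl; apply: bvar_w; lia.
rewrite sumr_const_nat => /eqP; rewrite pnatr_eq0; lia.
Qed.

Lemma bvar_v0_ge0 l : 0 <= meval v0 (bvar k m l).
Proof.
rewrite /bvar; case: insubP => [i _ vi|_]; last by rewrite meval0.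
by rewrite mevalXU /v0; case: ifP.
Qed.

Lemma bvar_v0_k : meval v0 (bvar k m k.+1) = 1.
Proof.
rewrite /bvar; case: insubP => [i _ vi|h] /=; last by exfalso; move: h; lia.
by rewrite mevalXU /v0 vi ltnn.
Qed.

Lemma bvar_v0_lo l : (1 <= k)%N -> (l <= k)%N -> meval v0 (bvar k m l) = 0.
Proof.
move=> hk hl; rewrite /bvar; case: insubP => [i _ vi|_]; last by rewrite meval0.
rewrite mevalXU /v0 vi; have -> : (l.-1 < k)%N by lia. by [].
Qed.

Definition Good (z : {fraction {mpoly rat[k + m]}}) :=
  exists f g : {mpoly rat[k + m]}, meval v0 g != 0 /\ z = f%:F / g%:F.

Lemma ev_neq0 (g : {mpoly rat[k + m]}) : meval v0 g != 0 -> g%:F != 0.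
Proof. by rewrite tofrac_eq0; apply: contra => /eqP ->; rewrite meval0. Qed.

Lemma Good_Tf d p : (1 <= p)%N -> (p + d <= k + m)%N -> Good (Tf be d k.+1 p).
Proof.
elim: d p => [|d IH] p h1 h2.
  rewrite /=; case: eqP => [E|_]; last by exists 0, 1; rewrite meval1 oner_neq0 tofrac0 mul0r.
  subst p; exists 1, (bvar k m k.+1); rewrite bvar_v0_k oner_neq0 tofrac1 div1r; split => //.
case: (boolP ((k.+1 < p) || (p + d.+1 < k.+1))%N) => hin.
  by rewrite Tf0 //; exists 0, 1; rewrite meval1 oner_neq0 tofrac0 mul0r.
move: hin; rewrite negb_or -!leqNgt => /andP[hin1 hin2].
have a1 : (1 <= p.+1)%N by [].
have a2 : (p.+1 + d <= k + m)%N by rewrite addSn -addnS.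
have a3 : (p + d <= k + m)%N by apply: leq_trans h2; rewrite leq_add2l.
have [f1 [g1 [hg1 e1]]] := IH p.+1 a1 a2.
have [f2 [g2 [hg2 e2]]] := IH p h1 a3.
set l := \sum_(p <= l < (p + d.+1).+1) bvar k m l.
have hl : meval v0 l != 0.
  rewrite lt0r_neq0 // /l raddf_sum (big_cat_nat (n:=k.+1)) /=; try lia.
  rewrite [X in _ + X]big_ltn /=; last lia.
  rewrite bvar_v0_k addrCA.
  apply: (lt_le_trans ltr01); rewrite lerDl.
  by apply: addr_ge0; apply: sumr_ge0 => i _; apply: bvar_v0_ge0.
exists (f1 * g2 + f2 * g1), (l * g1 * g2); split.
  by rewrite !mevalM !mulf_neq0.
rewrite /= e1 e2 Sbe -/l !tofracD !tofracM.
have := ev_neq0 hl; have := ev_neq0 hg1; have := ev_neq0 hg2 => n2 n1 nl.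
have H := @fracid _ l%:F g1%:F g2%:F f1%:F f2%:F nl n1 n2.
exact: H.
Qed.

Lemma Mform_v0 (eps : {ffun 'I_k -> bool}) t : (1 <= t <= k)%N ->
  meval v0 (Mform m eps t) = 0.
Proof.
move=> ht; rewrite /Mform raddf_sum big_nat_cond big1 // => l /andP[/andP[_ hl] _].
apply: bvar_v0_lo; lia.
Qed.

End Conc.

Unset Implicit Arguments.
Theorem mainTheorem8 (k m : nat) (hm : (1 <= m)%N) :
  exists f g : {mpoly rat[k + m]},
    g != 0 /\
    Qfrac k m = f%:F / g%:F /\
    (forall (eps' : {ffun 'I_k -> bool}) (t : nat),
        (1 <= t <= k)%N -> ~ mdvd (Mform m eps' t) g).
Proof.
have hQ : Qfrac k m = (-1) ^+ k * Tf (be k m) (k + m).-1 k.+1 1.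
  rewrite Q_Phi (Phi_formula (hS hm)) //; lia.
have h2 : (1 + (k + m).-1 <= k + m)%N by lia.
have [f [g [hg e]]] := @Good_Tf k m hm (k + m).-1 1 isT h2.
exists ((-1) ^+ k * f), g; split; [|split].
- by apply: contra hg => /eqP ->; rewrite meval0.
- by rewrite hQ e tofracM tofracXn tofracN tofrac1 mulrA.
- move=> eps t ht [h hgh]; move: hg; rewrite hgh mevalM Mform_v0 // mul0r eqxx.
  by [].
Qed.
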